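(* Let $G$ be a finite group of order $n$ and $S\subseteq G\setminus\{1\}$ an inverse-closed normal subset such that $\Gamma=\operatorname{Cay}(G,S)$ is connected with diameter $d$. For $1\le i\le d$ let $S_i$ be the set of vertices at distance exactly $i$ from the vertex $1$, and let $H'=\{h\in\mathbb{Z}_n^*\mid S_i^h=S_i\text{ for all }1\le i\le d\}$. Then the distance splitting field of $\Gamma$ is $$\mathbb{SF}_D(\Gamma)=\mathbb{Q}(\zeta_n)^{\eta^{-1}(H')}=\{x\in\mathbb{Q}(\zeta_n)\mid \sigma(x)=x\text{ for all }\sigma\in\eta^{-1}(H')\},$$ and the distance algebraic degree is $\operatorname{Deg}_D(\Gamma)=\varphi(n)/|H'|$. In particular, $\Gamma$ is distance integral if and only if $S_i^h=S_i$ for all $1\le i\le d$ and all $h\in\mathbb{Z}_n^*$.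
   Context: $S$ normal means $gSg^{-1}=S$ for all $g\in G$. The Cayley graph $\operatorname{Cay}(G,S)$ has vertex set $G$ with $u\sim v$ iff $uv^{-1}\in S$. Its distance matrix $D(\Gamma)$ has $(u,v)$-entry the graph distance $d_\Gamma(u,v)$; $\mathbb{SF}_D(\Gamma)$ is the smallest subfield of $\mathbb{C}$ containing all eigenvalues of $D(\Gamma)$, $\operatorname{Deg}_D(\Gamma)=[\mathbb{SF}_D(\Gamma):\mathbb{Q}]$, and distance integral means all eigenvalues of $D(\Gamma)$ are integers. $\zeta_n=e^{2\pi i/n}$; $\eta:\operatorname{Gal}(\mathbb{Q}(\zeta_n)/\mathbb{Q})\to\mathbb{Z}_n^*$ is the isomorphism with $\sigma(\zeta_n)=\zeta_n^{\eta(\sigma)}$; $S_i^h=\{s^h\mid s\in S_i\}$; $\varphi$ is Euler's totient. *)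

(* Defs.v *)
From HB Require Import structures.
From mathcomp Require Import all_boot all_order all_fingroup all_algebra all_solvable all_field.
Set Implicit Arguments. Unset Strict Implicit. Unset Printing Implicit Defensive.
Import Order.TTheory GRing.Theory Num.Theory.

Section Cayley.
Variable gT : finGroupType.
Local Open Scope group_scope.

Definition cayrel (S : {set gT}) : rel gT := fun u v => u * v^-1 \in S.

Definition ball (S : {set gT}) (u : gT) (k : nat) : {set gT} :=
  iter k (fun B => B :|: [set y | [exists x in B, cayrel S x y]]) [set u].

(* Graph distance: least k with v within distance k of u (paths have length
   < #|gT|; the value #|gT|.+1 only arises for unreachable vertices, which
   never happens under the connectedness hypothesis). *)
Definition cdist (S : {set gT}) (u v : gT) : nat :=
  find (fun k => v \in ball S u k) (iota 0 #|gT|.+1).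

Definition cay_connected (G : {group gT}) (S : {set gT}) : Prop :=
  forall u v, u \in G -> v \in G -> connect (cayrel S) u v.

Definition diam (G : {group gT}) (S : {set gT}) : nat :=
  \max_(u in G) \max_(v in G) cdist S u v.

Definition Sdist (G : {group gT}) (S : {set gT}) (i : nat) : {set gT} :=
  [set v in G | cdist S 1 v == i].

Definition powset (A : {set gT}) (h : nat) : {set gT} := [set a ^+ h | a in A].

Definition dist_mx (G : {group gT}) (S : {set gT}) : 'M[algC]_(#|G|) :=
  \matrix_(i, j) ((cdist S (enum_val i) (enum_val j))%:R)%R.

End Cayley.

Local Open Scope ring_scope.

Definition is_subfield (K : algC -> Prop) : Prop :=
  [/\ K 0, K 1, (forall x y, K x -> K y -> K (x - y) /\ K (x * y))
    & (forall x, K x -> x != 0 -> K x^-1)].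

Definition field_gen (A : algC -> Prop) (x : algC) : Prop :=
  forall K, is_subfield K -> (forall a, A a -> K a) -> K x.

Definition Qdim (K : algC -> Prop) (k : nat) : Prop :=
  exists b : 'I_k -> algC,
    [/\ forall i, K (b i),
        (forall c : 'I_k -> rat, \sum_i ratr (c i) * b i = 0 -> forall i, c i = 0)
      & (forall x, K x -> exists c : 'I_k -> rat, x = \sum_i ratr (c i) * b i)].

Definition SF_D (gT : finGroupType) (G : {group gT}) (S : {set gT}) : algC -> Prop :=
  field_gen (fun a => eigenvalue (dist_mx G S) a).

Definition distance_integral (gT : finGroupType) (G : {group gT}) (S : {set gT}) : Prop :=
  forall a, eigenvalue (dist_mx G S) a -> a \is a Num.int.

(* Main.v *)
Require Import Defs.
From HB Require Import structures.
From mathcomp Require Import all_boot all_order all_fingroup all_algebra all_solvable all_field all_character.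
From mathcomp Require Import ring.
Set Implicit Arguments. Unset Strict Implicit. Unset Printing Implicit Defensive.
Import Order.TTheory GRing.Theory Num.Theory.

Section Graph.
Variable gT : finGroupType.
Local Open Scope group_scope.
Implicit Types (S : {set gT}) (u v : gT).

Lemma ballS S u k : ball S u k.+1 =
  ball S u k :|: [set y | [exists x in ball S u k, cayrel S x y]].
Proof. by rewrite /ball iterS. Qed.

Lemma ball_morph S (phi psi : gT -> gT) :
  cancel phi psi -> cancel psi phi ->
  (forall x y, cayrel S (phi x) (phi y) = cayrel S x y) ->
  forall u k v, (phi v \in ball S (phi u) k) = (v \in ball S u k).
Proof.
move=> phiK psiK hc u k; elim: k => [|k IH] v.
  by rewrite /ball /= !in_set1 (inj_eq (can_inj phiK)).
rewrite !ballS !in_setU !in_set IH; congr (_ || _).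
apply/existsP/existsP => [[x /andP[Hx Hr]] | [x /andP[Hx Hr]]].
  exists (psi x); rewrite -IH psiK Hx /=.
  by rewrite -hc psiK.
by exists (phi x); rewrite IH Hx /= hc.
Qed.

Lemma cdist_morph S (phi psi : gT -> gT) :
  cancel phi psi -> cancel psi phi ->
  (forall x y, cayrel S (phi x) (phi y) = cayrel S x y) ->
  forall u v, cdist S (phi u) (phi v) = cdist S u v.
Proof.
move=> phiK psiK hc u v; rewrite /cdist; apply: eq_find => k.
exact: ball_morph.
Qed.

Lemma cdist_transl S u v : cdist S u v = cdist S 1 (v * u^-1).
Proof.
rewrite -(mulgV u) (cdist_morph (phi := fun x => x * u^-1) (psi := fun x => x * u)) //.
- by move=> x; rewrite mulgKV.
- by move=> x; rewrite mulgK.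
by move=> x y; rewrite /cayrel invMg invgK mulgA mulgKV.
Qed.

Lemma cdist_conj (G : {group gT}) S g u v : g \in G ->
  (forall g, g \in G -> S :^ g = S) ->
  cdist S (u ^ g) (v ^ g) = cdist S u v.
Proof.
move=> Gg hS; apply: (@cdist_morph S (fun x => x ^ g) (fun x => x ^ g^-1)).
- by move=> x; rewrite conjgK.
- by move=> x; rewrite conjgKV.
by move=> x y; rewrite /cayrel -conjVg -conjMg -{1}(hS g Gg) memJ_conjg.
Qed.

Lemma cdist1_conj (G : {group gT}) S g v : g \in G ->
  (forall g, g \in G -> S :^ g = S) ->
  cdist S 1 (v ^ g) = cdist S 1 v.
Proof. by move=> Gg hS; rewrite -{1}(conj1g g) (cdist_conj 1 v Gg hS). Qed.

Lemma cdist1_eq0 S v : (cdist S 1 v == 0)%N = (v == 1).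
Proof.
rewrite /cdist /=. have -> : v \in ball S 1 0 = (v == 1) by rewrite /ball /= in_set1.
by case: (v == 1).
Qed.

Lemma cdist_le_diam (G : {group gT}) S v : v \in G -> (cdist S 1 v <= diam G S)%N.
Proof.
move=> Gv; rewrite /diam.
apply: (leq_trans _ (@leq_bigmax_cond _ (fun u => u \in G) (fun u => \max_(v in G) cdist S u v) _ (group1 G))).
exact: (@leq_bigmax_cond _ (fun v => v \in G) (fun v => cdist S 1 v) _ Gv).
Qed.

End Graph.

Section Pow.
Variable gT : finGroupType.
Local Open Scope group_scope.
Variables (G : {group gT}) (S : {set gT}).
Hypothesis hS : forall g, g \in G -> S :^ g = S.

Lemma expg_modG y k : y \in G -> (k = 1 %[mod #|G|])%N -> y ^+ k = y.
Proof.
move=> Gy hk; rewrite -(expg_mod _ (expg_cardG Gy)) hk.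
by rewrite (expg_mod _ (expg_cardG Gy)) expg1.
Qed.

Definition hinv (h : nat) := (h ^ (totient #|G|).-1)%N.

Lemma hinvP h y : coprime h #|G| -> y \in G -> (y ^+ hinv h) ^+ h = y.
Proof.
move=> ch Gy; rewrite -expgM; apply: expg_modG => //.
rewrite /hinv -expnSr prednK ?Euler_exp_totient //.
by rewrite totient_gt0 cardG_gt0.
Qed.

Lemma hinvP2 h y : coprime h #|G| -> y \in G -> (y ^+ h) ^+ hinv h = y.
Proof.
move=> ch Gy; rewrite -expgM mulnC expgM; exact: hinvP.
Qed.

Lemma coprime_hinv h : coprime h #|G| -> coprime (hinv h) #|G|.
Proof. by move=> ch; rewrite /hinv coprimeXl. Qed.

Lemma Sdist_pow h :
  coprime h #|G| ->
  (forall i, (1 <= i <= diam G S)%N -> powset (Sdist G S i) h = Sdist G S i) <->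
  (forall y, y \in G -> cdist S 1 (y ^+ h) = cdist S 1 y).
Proof.
move=> ch; split=> [H y Gy | H i _].
  have [/eqP -> | ny1] := boolP (y == 1); first by rewrite expg1n.
  have hi : (1 <= cdist S 1 y <= diam G S)%N by rewrite lt0n cdist1_eq0 ny1 cdist_le_diam.
  have : y ^+ h \in powset (Sdist G S (cdist S 1 y)) h.
    by apply: imset_f; rewrite inE Gy eqxx.
  by rewrite H // inE => /andP[_ /eqP].
apply/setP => y; apply/imsetP/idP.
  case=> a; rewrite !inE => /andP[Ga /eqP ha] ->.
  by rewrite groupX // H // ha eqxx.
rewrite inE => /andP[Gy /eqP hy]; exists (y ^+ hinv h); last by rewrite hinvP.
by rewrite inE groupX //= -H ?groupX // hinvP // hy.
Qed.

End Pow.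

Local Open Scope ring_scope.
Section Spec.
Variable gT : finGroupType.
Variables (G : {group gT}) (S : {set gT}).
Hypothesis hS : forall g, g \in G -> (S :^ g)%g = S.
Definition fd (x : gT) : algC := (cdist S 1 x)%:R.
Local Notation f := fd.
Let aG := regular_repr algC G.

Lemma distmx_reg : dist_mx G S = \sum_(x in G) f x *: aG x.
Proof.
apply/matrixP => i j; rewrite !mxE summxE.
rewrite (bigD1 ((enum_val i)^-1 * enum_val j)%g) /=; last by rewrite groupM ?groupV ?enum_valP.
rewrite big1 ?addr0.
  rewrite mxE /aG /= /regular_mx mxE.
  rewrite mulKVg gring_valK mxE !eqxx mulr1 /f cdist_transl.
  have -> : ((enum_val i)^-1 * enum_val j = (enum_val j * (enum_val i)^-1) ^ enum_val i)%g.
    by rewrite conjgE !mulgA mulgKV.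
  by rewrite (cdist1_conj _ (enum_valP i) hS).
move=> x /andP[Gx nx]; rewrite mxE /regular_mx mxE mxE.
have -> : (j == gring_index G (enum_val i * x)) = false.
  apply/negbTE/eqP => hj; move/eqP: nx; apply.
  have : enum_val j = (enum_val i * x)%g by rewrite hj gring_indexK // groupM ?enum_valP.
  by move=> ->; rewrite mulKg.
by rewrite andbF mulr0.
Qed.

Let E (i : Iirr G) := Wedderburn_id (socle_of_Iirr i).
Definition om (i : Iirr G) := ('chi[G]_i 1%g)^-1 * \sum_(x in G) f x * 'chi_i x.

Lemma f_conj x g : g \in G -> f (x ^ g)%g = f x.
Proof. by move=> Gg; rewrite /f (cdist1_conj _ Gg hS). Qed.

Lemma coef_decomp x : x \in G ->
  \sum_i om i * (#|G|%:R^-1 * ('chi_i 1%g * 'chi_i x^-1%g)) = f x.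
Proof.
move=> Gx.
have -> : \sum_i om i * (#|G|%:R^-1 * ('chi_i 1%g * 'chi_i x^-1%g)) =
   #|G|%:R^-1 * \sum_(y in G) f y * (#|'C_G[y]%g|%:R *+ (y \in (x ^: G)%g)).
  symmetry; under eq_bigr => y _ do rewrite -(second_orthogonality_relation y Gx) mulr_sumr.
  rewrite exchange_big /= mulr_sumr; apply: eq_bigr => i _.
  rewrite /om irr_inv (eq_bigr (fun y => (f y * 'chi_i y) * ('chi_i x)^*)); last first.
    by move=> y _; rewrite mulrA.
  rewrite -mulr_suml; have nz := irr1_neq0 i; have nG := neq0CG G.
  rewrite -[LHS]mulr1 -(mulVf nz); ring.
have sxG : (x ^: G)%g \subset G by rewrite class_subG.
have cC y : y \in (x ^: G)%g -> #|'C_G[y]%g|%:R = #|G|%:R / #|(x ^: G)%g|%:R :> algC.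
  move=> yx; have /class_eqP <- := yx.
  rewrite -index_cent1 -(Lagrange (subsetIl G 'C[y]%g)) natrM mulfK //.
  by rewrite pnatr_eq0 -lt0n indexg_gt0.
have -> : \sum_(y in G) f y * (#|'C_G[y]%g|%:R *+ (y \in (x ^: G)%g)) =
   \sum_(y in (x ^: G)%g) f x * (#|G|%:R / #|(x ^: G)%g|%:R).
  rewrite [RHS]big_mkcond [LHS]big_mkcond /=; apply: eq_bigr => y _.
  have [yx | nyx] := boolP (y \in (x ^: G)%g); last by rewrite mulr0n mulr0; case: (y \in G).
  rewrite (subsetP sxG _ yx) mulr1n cC //; congr (_ * _).
  by case/imsetP: yx => g Gg ->; rewrite f_conj.
rewrite sumr_const; have nG := neq0CG G.
have nxG : #|(x ^: G)%g|%:R != 0 :> algC.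
  by rewrite pnatr_eq0 -lt0n card_gt0; apply/set0Pn; exists x; exact: class_refl.
by rewrite -[X in _ * X]mulr_natr -mulrA mulfVK // mulrCA mulVf // mulr1.
Qed.

Lemma reg_decomp : \sum_(x in G) f x *: aG x = \sum_i om i *: E i.
Proof.
symmetry; transitivity (\sum_i \sum_(x in G)
   (om i * (#|G|%:R^-1 * ('chi_i 1%g * 'chi_i x^-1%g))) *: aG x).
  apply: eq_bigr => i _; rewrite /E Wedderburn_id_expansion !scaler_sumr.
  by apply: eq_bigr => x _; rewrite !scalerA mulrA.
rewrite (exchange_big_dep (fun x => x \in G)) /=; last by []. apply: eq_bigr => x Gx.
by rewrite -scaler_suml (eq_bigl xpredT) ?coef_decomp // => i; rewrite Gx.
Qed.

Let F'G := algC'G_pchar G.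

Lemma E_nz i : E i != 0.
Proof. by have [] := Wedderburn_is_id_pchar F'G (socle_of_Iirr i). Qed.

Lemma EE i j : E i *m E j = if i == j then E i else 0.
Proof.
have [<- | nij] := eqVneq i j.
  have [_ mem ide _] := Wedderburn_is_id_pchar F'G (socle_of_Iirr i).
  exact: ide.
apply: (@Wedderburn_mulmx0 _ _ _ _ (socle_of_Iirr i) (socle_of_Iirr j)).
- by rewrite (can_eq (@socle_of_IirrK _ G)).
- exact: Wedderburn_id_mem.
exact: Wedderburn_id_mem.
Qed.

Lemma Esum : \sum_i E i = 1%:M.
Proof.
rewrite -(Wedderburn_sum_id_pchar (DecSocleType (regular_repr algC G)) F'G).
by rewrite (reindex _ (socle_of_Iirr_bij _)).
Qed.

Let D := \sum_i om i *: E i.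

Lemma DE j : D *m E j = om j *: E j.
Proof.
rewrite /D mulmx_suml (bigD1 j) //= -scalemxAl EE eqxx big1 ?addr0 // => i nij.
by rewrite -scalemxAl EE (negbTE nij) scaler0.
Qed.

Lemma ED j : E j *m D = om j *: E j.
Proof.
rewrite /D mulmx_sumr (bigD1 j) //= -scalemxAr EE eqxx big1 ?addr0 // => i nij.
by rewrite -scalemxAr EE eq_sym (negbTE nij) scaler0.
Qed.

Lemma eig_om a : eigenvalue (dist_mx G S) a <-> exists i, a = om i.
Proof.
rewrite distmx_reg reg_decomp -/D; split.
  case/eigenvalueP => v hv nv.
  have : v != 0 by [].
  rewrite -[v]mulmx1 -Esum mulmx_sumr => /eqP hs.
  have [j _ nj] : exists2 j, true & v *m E j != 0.
    apply/exists_inP; apply: contraR nv => /exists_inPn hn.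
    rewrite -[v]mulmx1 -Esum mulmx_sumr big1 // => j _.
    by have := hn j isT; rewrite negbK => /eqP.
  exists j; apply/eqP; rewrite -subr_eq0.
  have : (a - om j) *: (v *m E j) = 0.
    by rewrite scalerBl [a *: _]scalemxAl -hv -mulmxA DE -scalemxAr subrr.
  by move/eqP; rewrite scaler_eq0 (negbTE nj) orbF.
case=> j ->; apply/eigenvalueP.
have [r nr] : exists r, row r (E j) != 0.
  apply/existsP; apply: contraR (E_nz j) => /existsPn hn.
  by apply/eqP/row_matrixP => r; rewrite row0; apply/eqP; rewrite -(negbK (_ == _)) hn.
exists (row r (E j)) => //.
by rewrite -row_mul ED linearZ.
Qed.

Lemma aut_irr (u : {rmorphism algC -> algC}) (h : nat) i x :
  (forall e, e ^+ #|G| = 1 -> u e = e ^+ h) -> x \in G ->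
  u ('chi[G]_i x) = 'chi_i (x ^+ h)%g.
Proof.
move=> hu Gx; pose C := <[x]>%G.
have sCG : C \subset G by rewrite cycle_subG.
have Cx : x \in C by exact: cycle_id.
have Cxh : (x ^+ h)%g \in C by rewrite mem_cycle.
have [r hr] := char_sum_irr (cfRes_char C (irr_char i)).
rewrite -(cfResE _ sCG Cx) -(cfResE _ sCG Cxh) hr !sum_cfunE rmorph_sum.
apply: eq_bigr => j _.
have lj : 'chi[C]_j \is a linear_char by apply: irr_cyclic_lin; exact: cycle_cyclic.
rewrite (lin_charX lj _ Cx) hu // -(lin_charX lj _ Cx).
have Gn : (x ^+ #|G|)%g = 1%g by exact: expg_cardG.
by rewrite Gn lin_char1.
Qed.

Lemma sum_pow (F : gT -> algC) k : coprime k #|G| ->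
  \sum_(x in G) F (x ^+ k)%g = \sum_(x in G) F x.
Proof.
move=> ck.
have inj : {in G &, injective (fun x => (x ^+ k)%g)}.
  by move=> x y Gx Gy /= e; rewrite -(hinvP2 ck Gx) e hinvP2.
rewrite -(big_imset F inj) /=; apply: eq_bigl => y.
apply/imsetP/idP => [[x Gx ->] | Gy]; first by rewrite groupX.
by exists (y ^+ hinv G k)%g; rewrite ?groupX ?hinvP.
Qed.

Lemma om_autE (u : {rmorphism algC -> algC}) (h : nat) i :
  (forall e, e ^+ #|G| = 1 -> u e = e ^+ h) ->
  u (om i) = ('chi_i 1%g)^-1 * \sum_(x in G) f x * 'chi_i (x ^+ h)%g.
Proof.
move=> hu; rewrite /om rmorphM fmorphV irr1_degree rmorph_nat rmorph_sum.
congr (_ * _); apply: eq_bigr => x Gx.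
by rewrite rmorphM /f rmorph_nat (aut_irr _ hu Gx).
Qed.

Lemma om_aut (u : {rmorphism algC -> algC}) (h : nat) :
  coprime h #|G| ->
  (forall e, e ^+ #|G| = 1 -> u e = e ^+ h) ->
  (forall i, u (om i) = om i) <->
  (forall y, y \in G -> cdist S 1 (y ^+ h)%g = cdist S 1 y).
Proof.
move=> ch hu; split => [H | H i]; last first.
  rewrite (om_autE _ hu); congr (_ * _).
  rewrite -(sum_pow (fun y => f y * 'chi_i y) ch); apply: eq_bigr => x Gx.
  by rewrite /f H.
have H1 (i : Iirr G) : \sum_(x in G) (f (x ^+ hinv G h)%g - f x) * 'chi_i x = 0.
  have := H i; rewrite (om_autE _ hu) => /(mulfI (invr_neq0 (irr1_neq0 i))).
  rewrite -(sum_pow (fun y => f y * 'chi_i (y ^+ h)%g) (coprime_hinv ch)).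
  move=> e; have e' : \sum_(x in G) f (x ^+ hinv G h)%g * 'chi_i x = \sum_(x in G) f x * 'chi_i x.
    by rewrite -e; apply: eq_bigr => x Gx; rewrite hinvP.
  rewrite (eq_bigr (fun x => f (x ^+ hinv G h)%g * 'chi_i x - f x * 'chi_i x)).
    by rewrite sumrB e' subrr.
  by move=> x Gx; rewrite mulrBl.
pose g x := f (x ^+ hinv G h)%g - f x.
have H2 y : y \in G -> g y = 0.
  move=> Gy.
  pose N := (\sum_(x in G) #|'C_G[x]%g| * (x \in (y ^: G)%g))%N.
  have : \sum_(i : Iirr G) (\sum_(x in G) g x * 'chi_i x) * ('chi_i y)^* = 0.
    by rewrite big1 // => i _; rewrite H1 mul0r.
  under eq_bigr => i _ do rewrite mulr_suml.
  rewrite (exchange_big_dep (fun x => x \in G)) //=.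
  rewrite (eq_bigr (fun x => g x * (#|'C_G[x]%g|%:R *+ (x \in (y ^: G)%g)))); last first.
    move=> x Gx; rewrite -(second_orthogonality_relation x Gy) mulr_sumr.
    rewrite (eq_bigl xpredT); last by move=> i; rewrite Gx.
    by apply: eq_bigr => i _; rewrite mulrA.
  have -> : \sum_(x in G) g x * (#|'C_G[x]%g|%:R *+ (x \in (y ^: G)%g)) = g y * N%:R.
    rewrite natr_sum mulr_sumr; apply: eq_bigr => x Gx.
    have [xy | nxy] := boolP (x \in (y ^: G)%g); last by rewrite mulr0n muln0 !mulr0.
    rewrite mulr1n muln1; congr (_ * _).
    case/imsetP: xy => c Gc ->; rewrite /g -conjXg !f_conj //.
  move/eqP; rewrite mulf_eq0 pnatr_eq0 => /orP[/eqP // | /eqP N0].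
  have : (0 < N)%N.
    rewrite /N (bigD1 y) //= class_refl muln1.
    by rewrite addn_gt0 cardG_gt0.
  by rewrite N0.
move=> y Gy; apply/eqP; rewrite -(eqr_nat algC) -/(f _) -/(f _).
have := H2 _ (groupX h Gy); rewrite /g hinvP2 // => /eqP; rewrite subr_eq0 => /eqP ->.
by [].
Qed.
End Spec.

Section SubField.
Variable K : algC -> Prop.
Hypothesis hK : is_subfield K.

Lemma sf0 : K 0. Proof. by case: hK. Qed.
Lemma sf1 : K 1. Proof. by case: hK. Qed.
Lemma sfB x y : K x -> K y -> K (x - y). Proof. by case: hK => _ _ h _ /h H /H []. Qed.
Lemma sfM x y : K x -> K y -> K (x * y). Proof. by case: hK => _ _ h _ /h H /H []. Qed.
Lemma sfV x : K x -> K x^-1.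
Proof.
case: hK => K0 _ _ h Kx; have [-> | nx] := eqVneq x 0; last exact: h.
by rewrite invr0.
Qed.
Lemma sfN x : K x -> K (- x). Proof. by move=> Kx; rewrite -sub0r; apply: sfB => //; exact: sf0. Qed.
Lemma sfD x y : K x -> K y -> K (x + y).
Proof. by move=> Kx Ky; rewrite -[y]opprK; apply: sfB => //; exact: sfN. Qed.
Lemma sfX x n : K x -> K (x ^+ n).
Proof. by move=> Kx; elim: n => [|n IH]; [rewrite expr0; exact: sf1 | rewrite exprS; exact: sfM]. Qed.
Lemma sf_nat n : K n%:R.
Proof. elim: n => [|n IH]; first exact: sf0. by rewrite -addn1 natrD; apply: sfD => //; exact: sf1. Qed.
Lemma sf_int (z : int) : K z%:~R.
Proof. case: z => n; first exact: sf_nat. by rewrite NegzE mulrNz; apply: sfN; exact: sf_nat. Qed.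
Lemma sf_rat (q : rat) : K (ratr q).
Proof. by rewrite /ratr; apply: sfM; [exact: sf_int | apply: sfV; exact: sf_int]. Qed.
Lemma sf_sum (I : Type) (r : seq I) (P : pred I) (F : I -> algC) :
  (forall i, P i -> K (F i)) -> K (\sum_(i <- r | P i) F i).
Proof. move=> h; apply: (big_ind K) => //; [exact: sf0 | exact: sfD]. Qed.
End SubField.

Lemma field_gen_sub (A K : algC -> Prop) x :
  is_subfield K -> (forall a, A a -> K a) -> field_gen A x -> K x.
Proof. by move=> hK hA /(_ K hK hA). Qed.

Lemma field_gen_in (A : algC -> Prop) x : A x -> field_gen A x.
Proof. by move=> Ax K _ /(_ x Ax). Qed.

Lemma field_gen_subfield (A : algC -> Prop) : is_subfield (field_gen A).
Proof.
split.
- by move=> K hK _; exact: sf0.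
- by move=> K hK _; exact: sf1.
- by move=> x y hx hy; split=> K hK hA; [apply: sfB | apply: sfM] => //; [exact: hx | exact: hy | exact: hx | exact: hy].
by move=> x hx _ K hK hA; apply: sfV => //; exact: hx.
Qed.

Section Image.
Variables (Qn : fieldExtType rat) (QnC : {rmorphism Qn -> algC}).

Definition img (F : {vspace Qn}) (x : algC) := exists2 y, y \in F & x = QnC y.

Lemma img_subfield (F : {subfield Qn}) : is_subfield (img F).
Proof.
split.
- by exists 0; rewrite ?mem0v ?rmorph0.
- by exists 1; rewrite ?mem1v ?rmorph1.
- move=> _ _ [a Fa ->] [b Fb ->]; split.
    by exists (a - b); rewrite ?rmorphB ?rpredB.
  by exists (a * b); rewrite ?rmorphM ?rpredM.
move=> _ [a Fa ->] _; exists a^-1; rewrite ?fmorphV //.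
by rewrite memvV.
Qed.

Lemma img_adjoin (K : algC -> Prop) (s : seq Qn) y :
  is_subfield K -> (forall a, a \in s -> K (QnC a)) ->
  y \in <<1 & s>>%VS -> K (QnC y).
Proof.
move=> hK; elim/last_ind: s y => [|s a IH] y hs.
  rewrite (Fadjoin_nil 1%AS) => /vlineP[k ->].
  by rewrite rmorphZ_num rmorph1 mulr1; exact: sf_rat.
rewrite adjoin_rcons => /Fadjoin_polyP[p Pp ->].
rewrite -horner_map horner_coef; apply: sf_sum => // i _.
apply: sfM => //; last first.
  by apply: sfX => //; apply: hs; rewrite mem_rcons mem_head.
rewrite coef_map; apply: IH; first by move=> b bs; apply: hs; rewrite mem_rcons inE bs orbT.
exact: polyOverP.
Qed.

End Image.

Theorem mainTheorem15 (gT : finGroupType) (G : {group gT}) (S : {set gT}) (z : algC) :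
  S \subset G -> (1%g \notin S) ->
  (forall s, s \in S -> (s^-1)%g \in S) ->
  (forall g, g \in G -> (S :^ g)%g = S) ->
  cay_connected G S ->
  (#|G|).-primitive_root z ->
  let n := #|G| in
  let d := diam G S in
  let H' := [set h : 'I_n | coprime h n &&
              [forall i : 'I_d.+1, (0 < i)%N ==> (powset (Sdist G S i) h == Sdist G S i)]] in
  [/\ (forall x : algC, SF_D G S x <->
        (field_gen (fun a => a = z) x /\
         forall (u : {rmorphism algC -> algC}) (h : 'I_n),
           h \in H' -> u z = z ^+ h -> u x = x)),
      Qdim (SF_D G S) (totient n %/ #|H'|)
    & (distance_integral G S <->
        (forall (i : nat) (h : 'I_n), (1 <= i <= d)%N -> coprime h n ->
           powset (Sdist G S i) h = Sdist G S i))].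
Proof.
move=> _ _ _ hS _ prim_z n d H'.
have [Qn galQn [QnC gQnC [w [pr_w genQn] QnG]]] := group_num_field_exists G.
have omQ (i : Iirr G) : img QnC fullv (om S i).
  have hI := img_subfield QnC {:Qn}%AS.
  rewrite /om; apply: sfM => //.
    by apply: sfV => //; rewrite irr1_degree; exact: sf_nat.
  apply: (@sf_sum _ hI) => x Gx; apply: sfM => //; first exact: sf_nat.
  have [a <-] := QnG _ _ _ (irr_char i) x (order_dvdG Gx).
  by exists a; rewrite ?memvf.
have [wq hwq] : exists wq : Iirr G -> Qn, forall i, QnC (wq i) = om S i.
  have omQ' (i : Iirr G) : exists y, QnC y == om S i by have [y _ ->] := omQ i; exists y.
  exists (fun i => xchoose (omQ' i)) => i; exact: (eqP (xchooseP (omQ' i))).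
pose s := [seq wq i | i <- enum (Iirr G)].
pose F1 := (<<1 & s>>)%AS.
have galF1 : galois F1 fullv.
  by apply: (galoisS _ galQn); rewrite subvf andbT; exact: subv_adjoin_seq.
pose zC := QnC w.
have pr_zC : n.-primitive_root zC by rewrite fmorph_primitive_root.
have galT (sg : gal_of {:Qn}) : sg \in 'Gal({:Qn} / 1)%g.
  by rewrite gal_kHom ?sub1v // k1HomE; apply: ahomWin.
have gal_exp (sg : gal_of {:Qn}) : exists2 h : 'I_n, sg w = w ^+ h & coprime h n.
  have pr : n.-primitive_root (sg w) by rewrite fmorph_primitive_root.
  have [h eh] := prim_rootP pr_w (prim_expr_order pr).
  by exists h => //; rewrite -(prim_root_exp_coprime _ pr_w) -eh.
have nu_roots (sg : gal_of {:Qn}) (nu : {rmorphism algC -> algC}) (h : nat) :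
    sg w = w ^+ h -> {morph QnC : a / sg a >-> nu a} ->
    forall e, e ^+ n = 1 -> nu e = e ^+ h.
  move=> eh Dnu e /(prim_rootP pr_zC)[k ->].
  by rewrite rmorphXn /= /zC -Dnu eh rmorphXn -!exprM mulnC.
have u_roots (u : {rmorphism algC -> algC}) (h : nat) :
    u z = z ^+ h -> forall e, e ^+ n = 1 -> u e = e ^+ h.
  move=> eh e /(prim_rootP prim_z)[k ->].
  by rewrite rmorphXn /= eh -!exprM mulnC.
have hmem (h : 'I_n) : h \in H' <-> coprime h n /\ (forall y, y \in G -> cdist S 1 (y ^+ h)%g = cdist S 1 y).
  rewrite inE; split.
    case/andP => ch /forallP hf; split => //; apply/(Sdist_pow S ch) => i /andP[i1 id].
    have id' : (i < d.+1)%N by rewrite ltnS.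
    by have := hf (Ordinal id'); rewrite /= i1 => /eqP.
  case=> ch hc; rewrite ch /=; apply/forallP => i; apply/implyP => i0; apply/eqP.
  by apply: ((Sdist_pow S ch).2 hc); rewrite i0 /= -ltnS ltn_ord.
have gal_ex (h : nat) : coprime h n -> exists sg : gal_of {:Qn}, sg w = w ^+ h.
  move=> ch; have [nuC DnuC] := Qn_aut_exists ch.
  have [nuQ DnuQ] := restrict_aut_to_normal_num_field QnC nuC.
  have hom_nu : kHom 1 {:Qn} (linfun nuQ).
    rewrite k1HomE; apply/ahom_inP.
    by split=> [u v | ]; rewrite !lfunE ?rmorphM ?rmorph1.
  have [|sg _ Dsg] := kHom_to_gal _ (normalFieldf 1) hom_nu; first by rewrite !subvf.
  exists sg; apply: (fmorph_inj QnC).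
  rewrite -Dsg ?memvf // lfunE DnuQ rmorphXn DnuC //.
  by rewrite prim_expr_order // fmorph_primitive_root.
have key1 (sg : gal_of {:Qn}) : sg \in 'Gal({:Qn} / F1)%g <-> (forall i, sg (wq i) = wq i).
  have := galois_connection [set sg] (subvf F1); rewrite sub1set => ->.
  split.
    move=> /Fadjoin_seqP[_ hs] i.
    have : wq i \in fixedField [set sg] by apply: hs; apply/mapP; exists i; rewrite ?mem_enum.
    by move/mem_fixedFieldP => [_ ->]; rewrite ?set11.
  move=> hw; apply/Fadjoin_seqP; split; first exact: sub1v.
  move=> _ /mapP[i _ ->]; apply/fixedFieldP; first exact: memvf.
  by move=> x; rewrite inE => /eqP ->.
have key2 (sg : gal_of {:Qn}) (h : nat) : coprime h n -> sg w = w ^+ h ->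
    sg \in 'Gal({:Qn} / F1)%g <-> (forall y, y \in G -> cdist S 1 (y ^+ h)%g = cdist S 1 y).
  move=> ch eh; have [nu Dnu] := gQnC sg.
  rewrite key1 -(om_aut hS ch (nu_roots sg nu h eh Dnu)); split => H i.
    by rewrite -hwq -Dnu H.
  by apply: (fmorph_inj QnC); rewrite Dnu hwq H.
have SFimg x : SF_D G S x <-> img QnC F1 x.
  split.
    apply: field_gen_sub; first exact: img_subfield.
    move=> a /(eig_om hS)[i ->]; exists (wq i); rewrite ?hwq //.
    by apply: seqv_sub_adjoin; apply/mapP; exists i; rewrite ?mem_enum.
  case=> y Fy ->; apply: (img_adjoin (field_gen_subfield _) _ Fy).
  move=> _ /mapP[i _ ->]; apply: field_gen_in; rewrite hwq.
  by apply/(eig_om hS); exists i.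
have fullimg x : img QnC fullv x <-> field_gen (fun a => a = z) x.
  split.
    case=> y _ ->; apply: (img_adjoin (field_gen_subfield _) (s := [:: w])).
      move=> a; rewrite inE => /eqP ->; rewrite -/zC.
      have [k ->] := prim_rootP prim_z (prim_expr_order pr_zC).
      by apply: (sfX (field_gen_subfield _)); exact: field_gen_in.
    by rewrite adjoin_seq1 genQn memvf.
  apply: field_gen_sub; first exact: img_subfield.
  move=> a ->; have [k ->] := prim_rootP pr_zC (prim_expr_order prim_z).
  by exists (w ^+ k); rewrite ?memvf ?rmorphXn.
have fixF1 y : y \in F1 <-> (forall sg, sg \in 'Gal({:Qn} / F1)%g -> sg y = y).
  have := galois_fixedField galF1 => /eqP; rewrite eqEsubv => /andP[h1 h2].
  split=> [Fy sg gs | H]; first by apply: (fixed_gal _ gs Fy); exact: subvf.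
  by apply: (subvP h1); apply/fixedFieldP => //; exact: memvf.
have agree (u1 u2 : {rmorphism algC -> algC}) : u1 zC = u2 zC -> forall y, u1 (QnC y) = u2 (QnC y).
  move=> e y; have : y \in <<1; w>>%VS by rewrite genQn memvf.
  case/Fadjoin_polyP => p Pp ->; rewrite -horner_map.
  rewrite -!horner_map /= -!map_poly_comp.
  by rewrite !map_Qnum_poly // e.
have partA (x : algC) : SF_D G S x <->
    (field_gen (fun a => a = z) x /\
     forall (u : {rmorphism algC -> algC}) (h : 'I_n), h \in H' -> u z = z ^+ h -> u x = x).
  rewrite SFimg; split.
    case=> y Fy ->; split; first by apply/fullimg; exists y; rewrite ?memvf.
    move=> u h /hmem[ch hc] uz.
    have [sg eh] := gal_ex h ch.
    have [nu Dnu] := gQnC sg.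
    have gs : sg \in 'Gal({:Qn} / F1)%g by apply/(key2 sg h ch eh).
    transitivity (nu (QnC y)); last by rewrite -Dnu ((fixF1 y).1 Fy sg gs).
    apply: agree.
    by rewrite (u_roots u h uz zC (prim_expr_order pr_zC)) (nu_roots sg nu h eh Dnu zC (prim_expr_order pr_zC)).
  case=> /fullimg[y _ ->] H; exists y => //; apply/fixF1 => sg gs.
  have [h eh ch] := gal_exp sg.
  have [nu Dnu] := gQnC sg.
  have hH : h \in H' by apply/hmem; split => //; exact: (key2 sg h ch eh).1 gs.
  have := H nu h hH (nu_roots sg nu h eh Dnu z (prim_expr_order prim_z)).
  by rewrite -Dnu => /fmorph_inj.
pose ItoQ (h : 'I_n) : gal_of {:Qn} := odflt 1%g [pick sg : gal_of {:Qn} | sg w == w ^+ h].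
have ItoQP (h : 'I_n) : coprime h n -> ItoQ h w = w ^+ h.
  move=> ch; rewrite /ItoQ; case: pickP => [sg /eqP // | none].
  have [sg esg] := gal_ex h ch.
  by have := none sg; rewrite esg eqxx.
have galE (sg tg : gal_of {:Qn}) : sg w = tg w -> sg = tg.
  move=> e; apply/eqP/gal_eqP => y _; have : y \in <<1; w>>%VS by rewrite genQn memvf.
  case/Fadjoin_polyP => p Pp ->.
  by rewrite -!horner_map !(fixedPoly_gal (sub1v _) (galT _) Pp) /= e.
have ItoQ_inj (A : {set 'I_n}) : (forall h, h \in A -> coprime h n) -> {in A &, injective ItoQ}.
  move=> hA h1 h2 c1 c2 e.
  have : w ^+ h1 = w ^+ h2 by rewrite -!ItoQP ?hA // e.
  move/eqP; rewrite (eq_prim_root_expr pr_w) !modn_small // => /eqP h12.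
  exact: val_inj.
have GalF1E : 'Gal({:Qn} / F1)%g = ItoQ @: H'.
  apply/setP => sg; apply/idP/imsetP.
    move=> gs; have [h eh ch] := gal_exp sg; exists h.
      by apply/hmem; split => //; exact: (key2 _ _ ch eh).1 gs.
    by apply: galE; rewrite ItoQP.
  by case=> h /hmem[ch hc] ->; apply/(key2 _ h ch (ItoQP h ch)).
have Gal1E : 'Gal({:Qn} / 1)%g = ItoQ @: [set h : 'I_n | coprime h n].
  apply/setP => sg; apply/idP/imsetP => [_ | [h _ ->] //].
  have [h eh ch] := gal_exp sg; exists h; first by rewrite inE.
  by apply: galE; rewrite ItoQP.
have cardH : #|'Gal({:Qn} / F1)%g| = #|H'|.
  by rewrite GalF1E card_in_imset //; apply: ItoQ_inj => h /hmem[].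
have cardU : #|'Gal({:Qn} / 1)%g| = totient n.
  rewrite Gal1E card_in_imset; last by apply: ItoQ_inj => h; rewrite inE.
  rewrite totient_count_coprime big_mkord cardsE -sum1_card big_mkcond /=.
  apply: eq_bigr => h _; rewrite unfold_in /= coprime_sym /coprime; case: eqnP => e; first by rewrite e.
  by move/eqP/negbTE: e => ->.
have dimF1 : \dim F1 = (totient n %/ #|H'|)%N.
  have e1 := galois_dim galF1.
  have e2 := galois_dim galQn.
  have e3 := dim_sup_field (subvf F1).
  rewrite dimv1 divn1 in e2.
  have Hpos : (0 < #|H'|)%N by rewrite -cardH cardG_gt0.
  by rewrite -cardU -e2 e3 e1 cardH mulKn.
have partB : Qdim (SF_D G S) (totient n %/ #|H'|).
  rewrite -dimF1; exists (fun i => QnC (vbasis F1)`_i); split.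
  - move=> i; apply/SFimg; exists (vbasis F1)`_i => //.
    by apply: vbasis_mem; apply: mem_nth; rewrite size_tuple.
  - move=> c hc; apply/freeP; first exact: basis_free (vbasisP F1).
    apply: (fmorph_inj QnC); rewrite rmorph0 -{}hc rmorph_sum; apply: eq_bigr => i _.
    by rewrite rmorphZ_num.
  move=> x /SFimg[y Fy ->]; exists (fun i => coord (vbasis F1) i y).
  rewrite {1}(coord_vbasis Fy) rmorph_sum; apply: eq_bigr => i _.
  by rewrite rmorphZ_num.
have Dint : dist_mx G S = map_mx intr (\matrix_(i, j) (cdist S (enum_val i) (enum_val j))%:Z : 'M[int]_#|G|).
  by apply/matrixP => i j; rewrite !mxE.
have eigA a : eigenvalue (dist_mx G S) a -> a \in Aint.
  rewrite eigenvalue_root_char Dint -map_char_poly => r.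
  apply: (root_monic_Aint r); first exact: monic_map (char_poly_monic _).
  by apply/polyOverP => k; rewrite coef_map; exact: intr_int.
have partC : distance_integral G S <->
    (forall (i : nat) (h : 'I_n), (1 <= i <= d)%N -> coprime h n ->
       powset (Sdist G S i) h = Sdist G S i).
  split.
    move=> DI i h hi ch; have [u hu] := Qn_aut_exists ch.
    apply: ((Sdist_pow S ch).2 _ i hi); apply/(om_aut hS ch hu) => j.
    have /DI/intrP[m ->] : eigenvalue (dist_mx G S) (om S j) by apply/(eig_om hS); exists j.
    by rewrite rmorph_int.
  move=> H a ea; have [i ->] := (eig_om hS a).1 ea.
  apply: Cint_rat_Aint; last by apply: eigA; apply/(eig_om hS); exists i.
  rewrite -hwq.
  have : wq i \in fixedField 'Gal({:Qn} / 1)%g.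
    apply/fixedFieldP; first exact: memvf.
    move=> sg _; have [h eh ch] := gal_exp sg.
    apply: ((key1 sg).1 _ i); apply/(key2 sg h ch eh); apply/(Sdist_pow S ch) => j hj.
    exact: H.
  have := galois_fixedField galQn => /eqP; rewrite eqEsubv => /andP[h1 _] /(subvP h1).
  by case/vlineP => k ->; rewrite rmorphZ_num rmorph1 mulr1 Crat_rat.
by split; [exact: partA | exact: partB | exact: partC].
Qed.
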